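(* Let $G$ be a $2K_2$-free graph and let $X$ be a minimal dominating set of $G$ with $|X|>\alpha(G)$. Then there is a triangle $T$ (a set of three pairwise adjacent vertices) with $T\subseteq X$ such that $X=T\cup A(T)$, where $A(T)$ is the set of vertices outside $T$ having no neighbour in $T$.
   Context: All graphs are finite, simple and undirected. $2K_2$-free means no induced subgraph isomorphic to the disjoint union of two edges. $\alpha(G)$ is the maximum size of an independent set of $G$. A dominating set is a vertex set $D$ such that every vertex outside $D$ has a neighbour in $D$; it is minimal if no proper subset is dominating. *)

(* Defs.v *)
From mathcomp Require Import all_boot.
Set Implicit Arguments. Unset Strict Implicit. Unset Printing Implicit Defensive.

Section Graph.
Variables (T : finType) (e : rel T).

Definition simple_graph : Prop := symmetric e /\ irreflexive e.

(* G is 2K2-free: no induced subgraph on 4 distinct vertices a,b,c,d whose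
   only edges are ab and cd. *)
Definition twoK2_free : Prop :=
  forall a b c d : T,
    uniq [:: a; b; c; d] -> e a b -> e c d ->
    [|| e a c, e a d, e b c | e b d].

Definition independent (S : {set T}) : bool :=
  [forall x in S, forall y in S, ~~ e x y].

Definition alpha : nat := \max_(S : {set T} | independent S) #|S|.

Definition dominating (D : {set T}) : bool :=
  [forall v, (v \in D) || [exists u in D, e v u]].

Definition minimal_dominating (D : {set T}) : bool :=
  dominating D && [forall D' : {set T}, (D' \proper D) ==> ~~ dominating D'].

Definition triangle (S : {set T}) : bool :=
  (#|S| == 3) && [forall x in S, forall y in S, (x != y) ==> e x y].

Definition anticomplete_set (S : {set T}) : {set T} :=
  [set v | (v \notin S) && [forall u in S, ~~ e v u]].

End Graph.

(* Main.v *)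
Require Import Defs.
From mathcomp Require Import all_boot.
Set Implicit Arguments. Unset Strict Implicit. Unset Printing Implicit Defensive.

Section Main.
Variables (T : finType) (e : rel T) (X : {set T}).
Hypothesis esym : symmetric e.
Hypothesis eirr : irreflexive e.
Hypothesis h2k : twoK2_free e.
Hypothesis hdom : dominating e X.
Hypothesis hmin : forall D : {set T}, D \proper X -> ~~ dominating e D.
Hypothesis halpha : alpha e < #|X|.

Lemma tk a b c d : a != b -> a != c -> a != d -> b != c -> b != d -> c != d ->
  e a b -> e c d -> ~~ e a c -> ~~ e a d -> ~~ e b c -> ~~ e b d -> False.
Proof.
move=> ab ac ad bc bd cd eab ecd nac nad nbc nbd.
have := h2k (a:=a) (b:=b) (c:=c) (d:=d).
rewrite /= !inE !negb_or ab ac ad bc bd cd => /(_ isT eab ecd).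
by rewrite (negbTE nac) (negbTE nad) (negbTE nbc) (negbTE nbd).
Qed.

Lemma neq_of_e x y : e x y -> x != y.
Proof. by apply: contraTneq => ->; rewrite eirr. Qed.

Lemma indep_le S : independent e S -> #|S| <= alpha e.
Proof. by move=> H; rewrite /alpha; apply: (leq_bigmax_cond (P := independent e) (F := fun S : {set T} => #|S|)) H. Qed.

Definition inY y := (y \in X) && [exists z in X, e y z].

Lemma inYX y : inY y -> y \in X.
Proof. by case/andP. Qed.

Lemma inY_of x y : x \in X -> y \in X -> e x y -> inY x.
Proof. by move=> hx hy exy; rewrite /inY hx; apply/exists_inP; exists y. Qed.

Lemma priv y : inY y ->
  exists w, [/\ w \notin X, e y w & forall z, z \in X -> e w z -> z = y].
Proof.
case/andP=> yX /exists_inP[z zX eyz].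
have hp : X :\ y \proper X by rewrite properD1.
have := hmin hp; rewrite /dominating => /forallPn[v].
rewrite negb_or => /andP[vn /exists_inPn nb].
have vy : v != y.
  apply/eqP=> vy; subst v.
  have : z \in X :\ y by rewrite !inE zX andbT eq_sym neq_of_e.
  by move/nb; rewrite eyz.
have vX : v \notin X by move: vn; rewrite !inE vy.
move/forallP: hdom => /(_ v); rewrite (negbTE vX) /= => /exists_inP[u uX evu].
have uy : u = y.
  apply/eqP; apply: contraT => uy.
  have : u \in X :\ y by rewrite !inE uy uX.
  by move/nb; rewrite evu.
subst u.
exists v; split => //; first by rewrite esym.
move=> w wX evw; apply/eqP; apply: contraT => wy.
have : w \in X :\ y by rewrite !inE wy wX.
by move/nb; rewrite evw.
Qed.

Definition p y := odflt y [pick w | (w \notin X) && e y w && [forall z in X, e w z ==> (z == y)]].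

Lemma pP y : inY y ->
  [/\ p y \notin X, e y (p y) & forall z, z \in X -> e (p y) z -> z = y].
Proof.
move=> hy; rewrite /p; case: pickP => [w /andP[/andP[wX eyw] /forall_inP H]|H0] /=.
  by split => // z zX ewz; apply/eqP; apply: (implyP (H z zX)).
case: (priv hy) => w [wX eyw H]; move: (H0 w).
rewrite wX eyw /=; move/negbT/forall_inPn => [z zX].
by rewrite negb_imply => /andP[ewz]; rewrite (H z zX ewz) eqxx.
Qed.

Lemma pnX y : inY y -> p y \notin X. Proof. by case/pP. Qed.
Lemma pe y : inY y -> e y (p y). Proof. by case/pP. Qed.
Lemma pu y z : inY y -> z \in X -> e (p y) z -> z = y. Proof. by case/pP=> _ _ H; apply: H. Qed.

Lemma pinj x y : inY x -> inY y -> p x = p y -> x = y.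
Proof. by move=> hx hy pxy; apply: (pu hy (inYX hx)); rewrite -pxy esym pe. Qed.

Lemma pne x y : inY x -> inY y -> e (p x) (p y) -> x != y.
Proof. by move=> _ _; apply: contraTneq => ->; rewrite eirr. Qed.

Lemma Qlem (S : {set T}) : (forall a b, a \in S -> b \in S -> ~~ e a b) ->
  exists x y, [/\ inY x, inY y, x \notin S, y \notin S & e (p x) (p y)].
Proof.
move=> HS.
pose f x := if inY x && (x \notin S) then p x else x.
have finj : {in X &, injective f}.
  move=> x y xX yX; rewrite /f.
  case: ifP => [/andP[hx _]|_]; case: ifP => [/andP[hy _]|_] //.
  - exact: pinj.
  - by move=> pxy; move: (pnX hx); rewrite pxy yX.
  - by move=> pxy; move: (pnX hy); rewrite -pxy xX.
case: (boolP [exists x in X, exists y in X, e (f x) (f y)]) => [|Hn]; last first.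
  have : independent e (f @: X).
    apply/forall_inP => _ /imsetP[x xX ->]; apply/forall_inP => _ /imsetP[y yX ->].
    apply/negP => exy; move/negP: Hn; apply; apply/exists_inP; exists x => //.
    by apply/exists_inP; exists y.
  move/indep_le; rewrite card_in_imset //.
  by move=> H; move: (leq_ltn_trans H halpha); rewrite ltnn.
case/exists_inP=> x xX /exists_inP[y yX]; rewrite /f.
case: ifP => [/andP[hx xS]|hx]; case: ifP => [/andP[hy yS]|hy] exy.
- by exists x, y.
- have yx := pu hx yX exy.
  by subst y; rewrite hx xS in hy.
- rewrite esym in exy; have xy := pu hy xX exy. by subst x; rewrite hy yS in hx.
- have ix := inY_of xX yX exy. have iy : inY y by apply: (inY_of yX xX); rewrite esym.
  rewrite ix /= in hx; rewrite iy /= in hy.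
  move/negbFE: hx => xS; move/negbFE: hy => yS.
  by move: (HS x y xS yS); rewrite exy.
Qed.

Lemma H1 a b : inY a -> inY b -> a != b -> e a b || e (p a) (p b).
Proof.
move=> ha hb ab; case: (boolP (e a b)) => //= nab.
apply: contraT => npp; exfalso.
have pab : p a != p b by apply: contra ab => /eqP/(pinj ha hb) ->.
have apb : a != p b by apply: contraNneq (pnX hb) => <-; exact: inYX.
have pba : p a != b by apply: contraNneq (pnX ha) => ->; exact: inYX.
apply: (tk (a:=a) (b:=p a) (c:=b) (d:=p b)) => //.
- by apply: contraNneq (pnX ha) => <-; exact: inYX.
- by apply: contraNneq (pnX hb) => <-; exact: inYX.
- exact: pe. - exact: pe.
- apply/negP => e1; rewrite esym in e1; move: ab.
  by rewrite (pu hb (inYX ha) e1) eqxx.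
- by apply/negP => e1; move: ab; rewrite (pu ha (inYX hb) e1) eqxx.
Qed.

Lemma H2 a b x y : inY a -> inY b -> inY x -> inY y ->
  e a b -> e (p x) (p y) -> a != x -> a != y -> b != x -> b != y -> False.
Proof.
move=> ha hb hx hy eab epp ax ay bx b_y.
have nn u z : inY u -> inY z -> u != z -> ~~ e u (p z).
  move=> hu hz uz; apply/negP => e1; move: uz.
  by rewrite esym in e1; rewrite (pu hz (inYX hu) e1) eqxx.
have dX u z : inY u -> inY z -> u != p z.
  by move=> hu hz; apply: contraNneq (pnX hz) => <-; exact: inYX.
apply: (tk (a:=a) (b:=b) (c:=p x) (d:=p y)) => //; try by apply: dX.
- exact: neq_of_e. - exact: neq_of_e.
- exact: nn. - exact: nn. - exact: nn. - exact: nn.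
Qed.

Lemma H4 a b m : inY a -> inY b -> inY m -> e (p a) (p b) -> m != a -> m != b ->
  e (p m) (p a) || e (p m) (p b).
Proof.
move=> ha hb hm epp ma mb; apply: contraT; rewrite negb_or => /andP[n1 n2]; exfalso.
have nn u z : inY u -> inY z -> u != z -> ~~ e u (p z).
  move=> hu hz uz; apply/negP => e1; move: uz.
  by rewrite esym in e1; rewrite (pu hz (inYX hu) e1) eqxx.
have dX u z : inY u -> inY z -> u != p z.
  by move=> hu hz; apply: contraNneq (pnX hz) => <-; exact: inYX.
apply: (tk (a:=m) (b:=p m) (c:=p a) (d:=p b)) => //; try by apply: dX.
- by apply: contra ma => /eqP/(pinj hm ha) ->.
- by apply: contra mb => /eqP/(pinj hm hb) ->.
- exact: neq_of_e. - exact: pe. - exact: nn. - exact: nn.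
Qed.

Lemma H5 a b m : inY a -> inY b -> inY m -> e a b -> m != a -> m != b ->
  e m a || e m b.
Proof.
move=> ha hb hm eab ma mb; apply: contraT; rewrite negb_or => /andP[n1 n2]; exfalso.
have nn u z : inY u -> inY z -> u != z -> ~~ e u (p z).
  move=> hu hz uz; apply/negP => e1; move: uz.
  by rewrite esym in e1; rewrite (pu hz (inYX hu) e1) eqxx.
have dX u z : inY u -> inY z -> u != p z.
  by move=> hu hz; apply: contraNneq (pnX hz) => <-; exact: inYX.
apply: (tk (a:=a) (b:=b) (c:=m) (d:=p m)) => //; try by apply: dX.
- exact: neq_of_e. - by rewrite eq_sym. - by rewrite eq_sym.
- exact: pe. - by rewrite esym. - by apply: nn; rewrite // eq_sym.
- by rewrite esym. - by apply: nn; rewrite // eq_sym.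
Qed.

Lemma path_aux u v w m : inY u -> inY v -> inY w -> inY m ->
  m != u -> m != w -> m != v -> e (p u) (p w) -> e u v -> e v w -> False.
Proof.
move=> hu hv hw hm mu mw mv epp euv evw.
have uv := neq_of_e euv. have vw := neq_of_e evw. have uw := pne hu hw epp.
case/orP: (H4 hu hw hm epp mu mw) => e1.
- apply: (H2 hv hw hm hu evw e1); by rewrite // eq_sym.
- apply: (H2 hu hv hm hw euv e1); by rewrite // eq_sym.
Qed.

Lemma path u v w : inY u -> inY v -> inY w -> e u v -> e v w -> u != w -> e u w.
Proof.
move=> hu hv hw euv evw uw; apply: contraT => nuw; exfalso.
have epp : e (p u) (p w) by move: (H1 hu hw uw); rewrite (negbTE nuw).
have [|x [y [hx hy xS yS exy]]] := @Qlem [set u; w].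
  move=> a b; rewrite !inE => /orP[]/eqP-> /orP[]/eqP->; rewrite ?eirr //.
  by rewrite esym.
move: xS yS; rewrite !inE !negb_or => /andP[xu xw] /andP[yu yw].
case: (eqVneq x v) => [xv|xv].
  subst x. apply: (path_aux hu hv hw hy yu yw _ epp euv evw).
  by rewrite eq_sym (pne hv hy exy).
case: (eqVneq y v) => [yv|yv].
  subst y. apply: (path_aux hu hv hw hx xu xw xv epp euv evw).
by apply: (H2 hu hv hx hy euv exy); rewrite // eq_sym.
Qed.


Lemma not_indep : exists u v, [/\ u \in X, v \in X & e u v].
Proof.
case: (boolP (independent e X)) => [/indep_le H|].
  by move: (leq_ltn_trans H halpha); rewrite ltnn.
move/forall_inPn => [u uX /forall_inPn [v vX]]; rewrite negbK => euv.
by exists u, v.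
Qed.

Lemma tri_ex : exists a b c, [/\ inY a, inY b, inY c & [/\ e a b, e b c & e a c]].
Proof.
have [u [v [uX vX euv]]] := not_indep.
have hu := inY_of uX vX euv.
have hv : inY v by apply: (inY_of vX uX); rewrite esym.
have [|x [y [hx hy xS yS exy]]] := @Qlem [set u].
  by move=> a b; rewrite !inE => /eqP-> /eqP->; rewrite eirr.
rewrite !inE in xS yS.
have [w [hw wu wv epw]] : exists w, [/\ inY w, w != u, w != v & e (p v) (p w)].
  case: (eqVneq x v) => [xv|xv].
    subst x; exists y; split => //; by rewrite eq_sym (pne hv hy exy).
  case: (eqVneq y v) => [yv|yv].
    by subst y; exists x; split => //; rewrite esym.
  exfalso; apply: (H2 hu hv hx hy euv exy); by rewrite // eq_sym.
case/orP: (H5 hu hv hw euv wu wv) => e1.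
- have evw : e v w.
    apply: (path hv hu hw); rewrite 1?esym //; by rewrite eq_sym.
  exists u, v, w; split => //; split => //; by rewrite esym.
- have euw : e u w.
    apply: (path hu hv hw) => //; [by rewrite esym | by rewrite eq_sym].
  exists u, v, w; split => //; split => //; by rewrite esym.
Qed.

Lemma in_tri a b c d : inY a -> inY b -> inY c -> e a b -> e b c -> e a c ->
  inY d -> [|| d == a, d == b | d == c].
Proof.
move=> ha hb hc eab ebc eac hd.
have ab := neq_of_e eab. have bc := neq_of_e ebc. have ac := neq_of_e eac.
apply: contraT; rewrite !negb_or => /and3P[da db dc]; exfalso.
move: (hd) => /andP[dX /exists_inP[d' d'X edd']].
have hd' : inY d' by apply: (inY_of d'X dX); rewrite esym.
have [|x [y [hx hy xS yS exy]]] := @Qlem [set d'].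
  by move=> u v; rewrite !inE => /eqP-> /eqP->; rewrite eirr.
rewrite !inE in xS yS.
have [m [hm epm]] : exists m, inY m /\ e (p d) (p m).
  case: (eqVneq x d) => [xd|xd]; first by subst x; exists y.
  case: (eqVneq y d) => [yd|yd]; first by subst y; exists x; rewrite esym.
  exfalso; apply: (H2 hd hd' hx hy edd' exy); by rewrite // eq_sym.
case: (eqVneq m a) => [ma|ma].
  subst m; apply: (H2 hb hc hd ha ebc epm); by rewrite // eq_sym.
case: (eqVneq m b) => [mb|mb].
  subst m; apply: (H2 ha hc hd hb eac epm); by rewrite // eq_sym.
apply: (H2 ha hb hd hm eab epm); by rewrite // eq_sym.
Qed.

Lemma main_sec : exists Tr : {set T},
    [/\ triangle e Tr, Tr \subset X & X = Tr :|: anticomplete_set e Tr].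
Proof.
have [a [b [c [ha hb hc [eab ebc eac]]]]] := tri_ex.
have ab := neq_of_e eab. have bc := neq_of_e ebc. have ac := neq_of_e eac.
have intri := in_tri ha hb hc eab ebc eac.
exists (a |: (b |: [set c])).
have inT u : (u \in a |: (b |: [set c])) = [|| u == a, u == b | u == c] by rewrite !inE.
have TX u : [|| u == a, u == b | u == c] -> u \in X.
  by case/or3P=> /eqP->; apply: inYX.
have TY u : [|| u == a, u == b | u == c] -> inY u.
  by case/or3P=> /eqP->.
split.
- rewrite /triangle !cardsU1 cards1 !inE (negbTE ab) (negbTE ac) (negbTE bc) /=.
  apply/forall_inP => x; rewrite inT => /or3P[]/eqP->;
  apply/forall_inP => y; rewrite inT => /or3P[]/eqP->; apply/implyP => xy;
  first [by rewrite eqxx in xy | by rewrite ?eab ?ebc ?eac // esym ?eab ?ebc ?eac].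
- by apply/subsetP => u; rewrite inT; apply: TX.
apply/setP => v; rewrite in_setU inT inE inT; apply/idP/idP.
  move=> vX; case: (boolP [|| v==a, v==b | v==c]) => //= nvT.
  apply/forall_inP => u; rewrite inT => uT; apply/negP => evu.
  have hv := inY_of vX (TX u uT) evu.
  by rewrite (intri v hv) in nvT.
case/orP => [/TX //| /andP[nvT /forall_inP NT]].
apply: contraT => vX.
move/forallP: hdom => /(_ v); rewrite (negbTE vX) /= => /exists_inP[u uX evu].
have nu : ~~ inY u.
  apply/negP => /intri uT; move: (NT u); rewrite inT uT => /(_ isT).
  by rewrite evu.
have [|x [y [hx hy _ _ exy]]] := @Qlem set0.
  by move=> ? ?; rewrite inE.
have vp z : inY z -> v != p z.
  move=> hz; apply/eqP => vpz; move: (NT z); rewrite inT (intri z hz) => /(_ isT).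
  by rewrite vpz esym pe.
have up z : inY z -> ~~ e u (p z).
  move=> hz; apply/negP => e1; rewrite esym in e1.
  by move: nu; rewrite (pu hz uX e1) hz.
have up' z : inY z -> u != p z.
  by move=> hz; apply: contraNneq (pnX hz) => <-.
have [z [hz evz]] : exists z, inY z /\ e v (p z).
  case: (boolP (e v (p x))) => [e1|n1]; first by exists x.
  case: (boolP (e v (p y))) => [e1|n2]; first by exists y.
  exfalso; apply: (tk (a:=v) (b:=u) (c:=p x) (d:=p y)) => //;
    [exact: neq_of_e | exact: vp | exact: vp | exact: up' | exact: up'
    | exact: neq_of_e | exact: up | exact: up].
have fin y1 y2 : inY y1 -> inY y2 -> e y1 y2 -> y1 != z -> y2 != z ->
    ~~ e v y1 -> ~~ e v y2 -> False.
  move=> h1 h2 e12 y1z y2z n1 n2.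
  have vy u' : inY u' -> v != u' by move=> hu'; apply: contraNneq vX => ->; apply: inYX.
  have pzy u' : inY u' -> p z != u' by move=> hu'; apply: contraNneq (pnX hz) => ->; apply: inYX.
  have npz u' : inY u' -> u' != z -> ~~ e (p z) u'.
    by move=> hu' uz; apply/negP => e1; move: uz; rewrite (pu hz (inYX hu') e1) eqxx.
  apply: (tk (a:=v) (b:=p z) (c:=y1) (d:=y2)) => //; try by [apply: vy | apply: pzy | apply: npz].
  - exact: vp.
  - exact: neq_of_e.
have NTu u' : [|| u' == a, u' == b | u' == c] -> ~~ e v u' by move=> h; apply: NT; rewrite inT.
exfalso; move: (intri z hz) => /or3P[]/eqP zE; subst z.
- apply: (fin b c hb hc ebc);
  first [by rewrite eq_sym | by apply: NTu; rewrite eqxx ?orbT | done].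
- apply: (fin a c ha hc eac);
  first [by rewrite eq_sym | by apply: NTu; rewrite eqxx ?orbT | done].
- apply: (fin a b ha hb eab);
  first [by rewrite eq_sym | by apply: NTu; rewrite eqxx ?orbT | done].
Qed.

End Main.

Theorem corollary5p3 (T : finType) (e : rel T) (X : {set T}) :
  simple_graph e -> twoK2_free e ->
  minimal_dominating e X -> alpha e < #|X| ->
  exists Tr : {set T},
    [/\ triangle e Tr, Tr \subset X & X = Tr :|: anticomplete_set e Tr].
Proof.
move=> [esym eirr] h2k /andP[hdom /forallP hmin] halpha.
apply: (@main_sec T e X esym eirr h2k hdom _ halpha).
by move=> D hD; move: (hmin D); rewrite hD.
Qed.
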